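(* Let $Q$ be a generalized seed of length $s(Q)\le m$ and let $k\le m$. If $Q$ solves the cyclic $(m,k)$-problem, then for every integer $i\ge 0$ the generalized seed $Q_i=[Q,-^{m-s(Q)}]^i$ solves the (linear) $(m(i+1)+s(Q)-1,\,k)$-problem. Conversely, if $i\ge 1$ and $Q_i$ solves the $(m(i+1)+s(Q)-1,\,k)$-problem, then $Q$ solves the cyclic $(m,k)$-problem.
   Context: A generalized seed is a finite word over $\{\#,-\}$ (it may begin or end with the joker $-$); its length is called its span $s(Q)$. A binary word is an $(m,k)$-similarity if it has length $m$ and exactly $k$ zeros. $Q$ matches a binary word $w$ at position $j$ ($1\le j\le |w|-s(Q)+1$) if $w[j+t-1]=1$ for every $t$ with $Q[t]=\#$; $Q$ detects $w$ if it matches at some position. $Q$ solves the (linear) $(m,k)$-problem if it detects every $(m,k)$-similarity; $Q$ solves the cyclic $(m,k)$-problem if for every $(m,k)$-similarity $w$ it detects at least one cyclic rotation of $w$. For words $Q_1,Q_2$ over $\{\#,-\}$ and $i\ge0$, $[Q_1,Q_2]^i$ denotes the word $(Q_1Q_2)^iQ_1$; $-^{n}$ denotes $n$ jokers. *)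

(* Defs.v *)
From mathcomp Require Import all_boot.
Set Implicit Arguments. Unset Strict Implicit. Unset Printing Implicit Defensive.

(* A generalized seed is a word over {#,-}: encoded as seq bool,
   true = '#', false = '-' (joker).  Its span s(Q) is size Q.
   A binary word is a seq bool, true = 1, false = 0. *)

(* Q matches w at (0-indexed) position j: j + s(Q) <= |w| and every '#'
   of Q faces a 1 in w. (Paper's 1-indexed position j corresponds to j-1.) *)
Definition matches_at (Q w : seq bool) (j : nat) : Prop :=
  j + size Q <= size w /\
  (forall t, t < size Q -> nth false Q t -> nth false w (j + t)).

Definition detects (Q w : seq bool) : Prop := exists j, matches_at Q w j.

Definition similarity (m k : nat) (w : seq bool) : Prop :=
  size w = m /\ count (fun b => ~~ b) w = k.

Definition solves (Q : seq bool) (m k : nat) : Prop :=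
  forall w, similarity m k w -> detects Q w.

(* cyclic rotations of w: rot r w (for r >= size w, rot r w = w, so every
   rot r w is a cyclic rotation, and every rotation arises this way). *)
Definition solves_cyclic (Q : seq bool) (m k : nat) : Prop :=
  forall w, similarity m k w -> exists r, detects Q (rot r w).

Definition bracket_pow (Q1 Q2 : seq bool) (i : nat) : seq bool :=
  flatten (nseq i (Q1 ++ Q2)) ++ Q1.

Definition jokers (n : nat) : seq bool := nseq n false.

(* Main.v *)
Require Import Defs.
From mathcomp Require Import all_boot.
From Stdlib Require Import Lia.

Ltac tolia := intros;
  repeat match goal with
  | H : is_true (_ <= _) |- _ => let h := fresh "h" in have h := elimT leP H; clear H
  | H : is_true (_ == _) |- _ => let h := fresh "h" in have h := elimT eqP H; clear H
  | H : is_true (negb (_ == _)) |- _ => let h := fresh "h" in have h := elimN eqP H; clear H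
  end;
  try (match goal with |- is_true (_ == _) => apply/eqP end); try (match goal with |- is_true (_ <= _) => apply/leP end);
  unfold addn, subn, muln, addn_rec, subn_rec, muln_rec in *; lia.

Lemma bpS Q J i : bracket_pow Q J i.+1 = (Q ++ J) ++ bracket_pow Q J i.
Proof. by rewrite /bracket_pow /= catA. Qed.

Lemma size_bp Q m i : size Q <= m ->
  size (bracket_pow Q (jokers (m - size Q)) i) = i * m + size Q.
Proof.
move=> hs; elim: i => [|i IH]; first by [].
rewrite bpS size_cat IH size_cat /jokers size_nseq mulSn. tolia.
Qed.

Lemma bp_hash Q m i p : size Q <= m ->
  nth false (bracket_pow Q (jokers (m - size Q)) i) p ->
  exists l t, l <= i /\ t < size Q /\ p = l * m + t /\ nth false Q t.
Proof.
move=> hs; elim: i p => [|i IH] p.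
  move=> h; exists 0, p; split => //; split; last by [].
  rewrite ltnNge; apply/negP => hp; by rewrite nth_default in h.
rewrite bpS nth_cat size_cat /jokers size_nseq.
have -> : size Q + (m - size Q) = m by tolia.
case: ltnP => hpm.
  rewrite nth_cat; case: ltnP => hps h.
    by exists 0, p; split => //.
  by rewrite nth_nseq in h; case: ifP h.
move=> /IH [l [t [hl [ht [hp hq]]]]].
exists l.+1, t; split => //; split => //; split => //; tolia.
Qed.

Lemma bp_nth Q m i l t : size Q <= m -> l <= i -> t < size Q ->
  nth false (bracket_pow Q (jokers (m - size Q)) i) (l * m + t) = nth false Q t.
Proof.
move=> hs; elim: i l => [|i IH] l hl ht.
  by move: hl; rewrite leqn0 => /eqP ->.
rewrite bpS nth_cat size_cat /jokers size_nseq.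
have -> : size Q + (m - size Q) = m by tolia.
case: l hl => [|l] hl.
  rewrite ifT; last tolia.
  by rewrite nth_cat ht.
rewrite ifF; last (apply/negbTE; rewrite -leqNgt; tolia).
have -> : l.+1 * m + t - m = l * m + t by rewrite mulSn; tolia.
by apply: IH.
Qed.

Lemma nth_rot (u : seq bool) j t : j <= size u -> t < size u ->
  nth false (rot j u) t = nth false u ((j + t) %% size u).
Proof.
move=> hj ht; rewrite /rot nth_cat size_drop.
case: ltnP => h.
  rewrite nth_drop modn_small //; tolia.
rewrite nth_take; last tolia.
have -> : (j + t) %% size u = (j + t - size u) %% size u.
  rewrite modnB //; last tolia. rewrite modnn subn0.
  by rewrite ltnNge leq0n /= add0n.
  tolia.
rewrite modn_small; last tolia.
congr nth; tolia.
Qed.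

Lemma rot_ex (u : seq bool) r : exists r', r' <= size u /\ forall t, t < size u ->
  nth false (rot r u) t = nth false u ((r' + t) %% size u).
Proof.
case: (leqP r (size u)) => h.
  exists r; split => // t ht; exact: nth_rot.
exists 0; split => // t ht; rewrite rot_oversize ?(ltnW h) //.
by rewrite add0n modn_small.
Qed.

Definition andw (a b : seq bool) := [seq x.1 && x.2 | x <- zip a b].

Lemma count_andw a b : count negb (andw a b) <= count negb a + count negb b.
Proof.
elim: a b => [|x a IH] [|y b] //=.
rewrite -/(andw a b); case: x; case: y => /=; have hI := IH b; tolia.
Qed.

Lemma nth_andw a b p : size a = size b -> p < size a ->
  nth false (andw a b) p = nth false a p && nth false b p.
Proof.
move=> hab hp; rewrite /andw (nth_map (false, false)); last by rewrite size_zip -hab minnn.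
by rewrite nth_zip.
Qed.

Lemma classes m (w : seq bool) : 0 < m -> exists u, size u = m /\
  count negb u <= count negb w /\
  forall q, q < size w -> nth false u (q %% m) -> nth false w q.
Proof.
move=> hm; have [n hn] := ubnP (size w); elim: n w hn => // n IH w hw.
case: (leqP (size w) m) => hsm.
  exists (w ++ nseq (m - size w) true); split; first by rewrite size_cat size_nseq; tolia.
  split; first by rewrite count_cat count_nseq /= mul0n addn0.
  move=> q hq; rewrite modn_small; last tolia.
  by rewrite nth_cat hq.
have hd : size (drop m w) < n by rewrite size_drop; tolia.
have [u' [hu' [hc' hp']]] := IH _ hd.
exists (andw (take m w) u').
have hst : size (take m w) = m by rewrite size_take hsm.
split; first by rewrite size_map size_zip hst hu' minnn.
split.
  apply: leq_trans (count_andw _ _) _.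
  rewrite -{2}(cat_take_drop m w) count_cat; tolia.
move=> q hq; rewrite nth_andw ?hst ?hu' ?ltn_mod //.
case: (ltnP q m) => hqm.
  by rewrite modn_small // nth_take // => /andP [].
move=> /andP [_ h].
have hq' : q = (q - m) + m by tolia.
have : nth false (drop m w) (q - m).
  apply: hp'; first by rewrite size_drop; tolia.
  by have -> : (q - m) %% m = q %% m by rewrite {2}hq' modnDr.
by rewrite nth_drop addnC -hq'.
Qed.

Lemma fill (u : seq bool) k : count negb u <= k -> k <= size u ->
  exists u', size u' = size u /\ count negb u' = k /\
    forall p, nth false u' p -> nth false u p.
Proof.
move=> h1 h2; move: {2}(k - count negb u) (erefl (k - count negb u)) => d.
elim: d u h1 h2 => [|d IH] u h1 h2 hd.
  exists u; split => //; split => //; tolia.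
have hc : count negb u < size u by tolia.
have : has id u.
  rewrite has_count; have := count_predC id u.
  have -> : count (predC id) u = count negb u by apply: eq_count.
  tolia.
move=> hh.
have hp := has_find id u; rewrite hh in hp.
have hnp := nth_find false hh.
set p := find id u in hp hnp.
set u1 := set_nth false u p false.
have hs1 : size u1 = size u by rewrite size_set_nth; apply/maxn_idPr.
have hc1 : count negb u1 = (count negb u).+1.
  by rewrite count_set_nth_ltn // hnp /= subn0 addn1.
have [u' [hs' [hc' hp']]] := IH u1 ltac:(rewrite hc1; tolia) ltac:(rewrite hs1; tolia)
   ltac:(rewrite hc1; tolia).
exists u'; split; first by rewrite hs'.
split => // q /hp'; rewrite nth_set_nth /=.
by case: eqP => // ->.
Qed.

Lemma nth_w m (u z : seq bool) x : size u = m -> x < m ->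
  nth false (nseq m true ++ u ++ z) (m + x) = nth false u x.
Proof.
move=> hu hx; rewrite nth_cat size_nseq ifF; last by apply/negbTE; rewrite -leqNgt leq_addr.
by rewrite addKn nth_cat hu hx.
Qed.

Theorem mainTheorem6 (Q : seq bool) (m k : nat) :
  size Q <= m -> k <= m ->
  (solves_cyclic Q m k ->
     forall i : nat,
       solves (bracket_pow Q (jokers (m - size Q)) i) (m * (i + 1) + size Q - 1) k)
  /\
  (forall i : nat, 1 <= i ->
     solves (bracket_pow Q (jokers (m - size Q)) i) (m * (i + 1) + size Q - 1) k ->
     solves_cyclic Q m k).
Proof.
move=> hs hk; split.
  move=> hcyc i w [hw hcw].
  have hmi : m * (i + 1) = i * m + m by rewrite mulnDr muln1 mulnC.
  case: (posnP m) => hm.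
    have hq0 : size Q = 0 by apply/eqP; rewrite -leqn0 -hm.
    exists 0; split; last by move=> t; rewrite size_bp // hm hq0 muln0.
    by rewrite size_bp // add0n hm hq0 muln0.
  have [u [hu [hcu hpu]]] := classes m w hm.
  have [u' [hs' [hc' hp']]] := @fill u k ltac:(rewrite -hcw; exact: hcu) ltac:(rewrite hu //).
  rewrite hu in hs'.
  have [r [j0 [hj0 hmatch]]] := hcyc u' (conj hs' hc').
  have [r' [hr' hrot]] := rot_ex u' r.
  rewrite size_rot hs' in hj0.
  rewrite hs' in hrot.
  exists ((r' + j0) %% m).
  have hjm : (r' + j0) %% m < m by rewrite ltn_mod.
  split.
    rewrite size_bp // hw; tolia.
  move=> p hp /(bp_hash _ _ _ _ hs) [l [t [hl [ht [-> hq]]]]].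
  have hlm : l * m <= i * m by rewrite leq_mul2r hl orbT.
  apply: hpu; first by rewrite hw; tolia.
  apply: hp'.
  have := hmatch t ht hq.
  rewrite hrot; last tolia.
  suff -> : ((r' + j0) %% m + (l * m + t)) %% m = (r' + (j0 + t)) %% m by [].
  by rewrite modnDml addnCA modnMDl addnA.
move=> i hi hsol u [hu hku].
case hQ: Q => [|b Q'].
  by exists 0, 0; split => //; rewrite addn0 size_rot.
have hs1 : 0 < size Q by rewrite hQ.
rewrite -hQ.
have hmi : m * (i + 1) = i * m + m by rewrite mulnDr muln1 mulnC.
have hmi2 : m <= i * m by rewrite leq_pmull.
set n := m * (i + 1) + size Q - 1.
set w := nseq m true ++ u ++ nseq (n - 2 * m) true.
have hsw : size w = n by rewrite /w !size_cat !size_nseq hu /n; tolia.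
have hcw : count negb w = k by rewrite /w !count_cat !count_nseq /= !mul0n add0n addn0.
have [j [hjs hj]] := hsol w (conj hsw hcw).
rewrite size_bp // hsw /n in hjs.
have hjm : j < m by tolia.
exists j, 0; split; first by rewrite add0n size_rot hu.
move=> t ht hQt; rewrite add0n.
rewrite nth_rot ?hu //; last tolia; last exact: ltnW.
case: (ltnP (j + t) m) => hjt.
  rewrite modn_small //.
  have := hj (1 * m + t) ltac:(rewrite size_bp //; tolia) ltac:(rewrite bp_nth //).
  by rewrite mul1n addnCA nth_w.
have he : j + t = m + (j + t - m) by tolia.
have := hj (0 * m + t) ltac:(rewrite size_bp //; tolia) ltac:(rewrite bp_nth //).
rewrite mul0n add0n he nth_w //; last tolia.
by rewrite modnDl modn_small //; tolia.
Qed.
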